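(* Let $A$ be a $d$-dimensional polystochastic matrix of order $n$, $1\le k\le d-1$, and let $\Gamma$ be a $k$-dimensional plane of $A$ containing an index $\alpha$ with $0<a_\alpha<1$. Then there exist a $k$-dimensional plane $\Gamma'$ parallel to and diagonally located with respect to $\Gamma$, and an index $\alpha'\in\Gamma'$, with $0<a_{\alpha'}<1$.
   Context: $A=(a_\alpha)_{\alpha\in\{0,\dots,n-1\}^d}$ is polystochastic if nonnegative and every line (set of indices obtained by fixing all coordinates but one) sums to $1$. A $k$-dimensional plane of direction $(i_1,\dots,i_{d-k})$ is obtained by fixing coordinates $i_1,\dots,i_{d-k}$ to values $(\beta_1,\dots,\beta_{d-k})$ and letting the other coordinates vary. Two planes are parallel if they have the same direction, and parallel planes with fixed values $(\beta_j)$, $(\gamma_j)$ are diagonally located if $\beta_j\ne\gamma_j$ for every $j$. *)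

(* Defs.v *)
From mathcomp Require Import all_boot all_order all_algebra.
Set Implicit Arguments. Unset Strict Implicit. Unset Printing Implicit Defensive.
Import Order.TTheory GRing.Theory Num.Theory.
Local Open Scope ring_scope.

Definition mindex (d n : nat) := {ffun 'I_d -> 'I_n}.

Definition setcoord (d n : nat) (alpha : mindex d n) (i : 'I_d) (t : 'I_n)
  : mindex d n := [ffun j => if j == i then t else alpha j].

Definition polystochastic (R : numDomainType) (d n : nat)
  (A : {ffun mindex d n -> R}) : Prop :=
  (forall alpha, 0 <= A alpha) /\
  (forall (i : 'I_d) (alpha : mindex d n),
      \sum_(t < n) A (setcoord alpha i t) = 1).

(* A k-dimensional plane is given by its direction S (the set of d-k fixed
   coordinates) and the fixed values beta (only beta restricted to S
   matters). *)
Definition in_plane (d n : nat) (S : {set 'I_d}) (beta : mindex d n)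
  (alpha : mindex d n) : Prop :=
  forall i, i \in S -> alpha i = beta i.

Definition diag_located (d n : nat) (S : {set 'I_d}) (beta gamma : mindex d n)
  : Prop :=
  forall i, i \in S -> beta i <> gamma i.

(* Main.v *)
Require Import Defs.
From mathcomp Require Import all_boot all_order all_algebra.
From mathcomp Require Import lra.
Import Order.TTheory GRing.Theory Num.Theory.
Local Open Scope ring_scope.

Lemma line_frac (R : realFieldType) (d n : nat) (A : {ffun mindex d n -> R})
  (H : polystochastic A) (x : mindex d n) (i : 'I_d) :
  0 < A x < 1 -> exists t, t != x i /\ 0 < A (setcoord x i t) < 1.
Proof.
case: H => H0 H1 /andP[hx0 hx1].
have hsx : setcoord x i (x i) = x.
  by apply/ffunP=> j; rewrite ffunE; case: eqP => // ->.
have := H1 i x; rewrite (bigD1 (x i)) //= hsx.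
set r := \sum_(t | _) _ => hsum.
have rpos : 0 < r by lra.
case: (pickP [pred t | (t != x i) && (0 < A (setcoord x i t))]) => [t /andP[nt pt]|none].
  exists t; split => //; apply/andP; split => //.
  have : r = A (setcoord x i t) + \sum_(j | (j != x i) && (j != t)) A (setcoord x i j).
    by rewrite /r (bigD1 t).
  have := @sumr_ge0 R _ (index_enum 'I_n) (fun j => (j != x i) && (j != t))
            (fun j => A (setcoord x i j)) (fun j _ => H0 _).
  lra.
have : r = 0.
  rewrite /r big1 // => t nt.
  have := none t; rewrite /= nt /= => /negbT; rewrite -leNgt => hle.
  by apply/eqP; rewrite eq_le hle H0.
lra.
Qed.

Lemma iter_frac (R : realFieldType) (d n : nat) (A : {ffun mindex d n -> R})
  (H : polystochastic A) (alpha : mindex d n) (s : seq 'I_d) :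
  0 < A alpha < 1 ->
  exists a' : mindex d n, 0 < A a' < 1 /\ (forall i, i \in s -> a' i != alpha i)
     /\ (forall i, i \notin s -> a' i = alpha i).
Proof.
move=> ha; elim: s => [|i s [a' [hb [h1 h2]]]].
  by exists alpha; split => //; split.
case: (boolP (i \in s)) => his.
  exists a'; split => //; split => j; rewrite in_cons.
    by case/orP => [/eqP ->|]; apply: h1.
  by rewrite negb_or => /andP[_]; apply: h2.
have [t [nt ht]] := @line_frac R d n A H a' i hb.
exists (setcoord a' i t); split => //; split => j; rewrite in_cons ffunE.
  case: (eqVneq j i) => [->|nji] /=; first by rewrite -(h2 i his).
  exact: h1.
by rewrite negb_or => /andP[/negbTE -> ]; apply: h2.
Qed.

Theorem mainTheorem7 (R : realFieldType) (d n k : nat)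
  (A : {ffun mindex d n -> R}) (S : {set 'I_d}) (beta : mindex d n)
  (alpha : mindex d n) :
  polystochastic A ->
  (1 <= k)%N -> (k <= d - 1)%N ->
  #|S| = (d - k)%N ->
  in_plane S beta alpha -> 0 < A alpha < 1 ->
  exists (gamma alpha' : mindex d n),
    diag_located S beta gamma /\ in_plane S gamma alpha' /\
    0 < A alpha' < 1.
Proof.
move=> H _ _ _ hp ha.
have [a' [hb [h1 _]]] := @iter_frac R d n A H alpha (enum S) ha.
exists a', a'; split; last by split.
move=> i iS; rewrite -(hp i iS) => e.
by move: (h1 i); rewrite mem_enum iS e eqxx => /(_ isT).
Qed.
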